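(* Let $F$ be a field, $A\in\mathrm{Pan}(m,F)$ and $B\in\mathrm{Pan}(n,F)$. Then the Kronecker product $A\,\dot\times\, B$ lies in $\mathrm{Pan}(mn,F)$ and $\mu(A\,\dot\times\, B)=\mu(A)\mu(B)$.
   Context: $\Omega_n=\{0,\dots,n-1\}$ indexes rows and columns of $n\times n$ matrices. The $k$th upward (resp. downward) diagonal of an $n\times n$ matrix consists of positions $(i,j)$ with $i+j\equiv k$ (resp. $i-j\equiv k$) $\pmod n$. An $n\times n$ matrix over $F$ is panmagic if the sums of its entries along all rows, columns, upward diagonals and downward diagonals are equal; this common sum is its magic number $\mu$. $\mathrm{Pan}(n,F)$ denotes the set of $n\times n$ panmagic matrices over $F$. For $A=[a_{i,j}]_{i,j\in\Omega_m}$ and $B=[b_{r,s}]_{r,s\in\Omega_n}$, the Kronecker product $A\,\dot\times\,B$ is the $mn\times mn$ matrix whose $(in+r,\,jn+s)$ entry is $a_{i,j}b_{r,s}$ for $i,j\in\Omega_m$, $r,s\in\Omega_n$. *)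

(* Defs.v *)
From HB Require Import structures.
From mathcomp Require Import all_boot all_order all_algebra.
Set Implicit Arguments. Unset Strict Implicit. Unset Printing Implicit Defensive.
Import GRing.Theory.
Local Open Scope ring_scope.

(* A is panmagic with magic number mu: every row, column, upward diagonal
   {(i,j) | i+j = k mod n} and downward diagonal {(i,j) | i-j = k mod n}
   sums to mu. *)
Definition panmagic_with (F : fieldType) (n : nat) (A : 'M[F]_n) (mu : F) : Prop :=
  [/\ forall i : 'I_n, \sum_(j < n) A i j = mu,
      forall j : 'I_n, \sum_(i < n) A i j = mu,
      forall k : 'I_n, \sum_(i < n) \sum_(j < n | ((i + j) %% n == k)%N) A i j = mu
    & forall k : 'I_n, \sum_(i < n) \sum_(j < n | ((i + (n - j)) %% n == k)%N) A i j = mu].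

Definition panmagic (F : fieldType) (n : nat) (A : 'M[F]_n) : Prop :=
  exists mu, panmagic_with A mu.

Lemma kron_hi_proof (m n : nat) (k : 'I_(m * n)) : (k %/ n < m)%N.
Proof.
case: k => k /=; case: n => [|n]; first by rewrite muln0.
by rewrite ltn_divLR.
Qed.

Lemma kron_lo_proof (m n : nat) (k : 'I_(m * n)) : (k %% n < n)%N.
Proof.
case: k => k /=; case: n => [|n]; first by rewrite muln0.
by rewrite ltn_mod.
Qed.

Definition kron_hi (m n : nat) (k : 'I_(m * n)) : 'I_m := Ordinal (kron_hi_proof k).
Definition kron_lo (m n : nat) (k : 'I_(m * n)) : 'I_n := Ordinal (kron_lo_proof k).

Definition kron (F : fieldType) (m n : nat) (A : 'M[F]_m) (B : 'M[F]_n) : 'M[F]_(m * n) :=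
  \matrix_(k, l) (A (kron_hi k) (kron_hi l) * B (kron_lo k) (kron_lo l)).

(* Main.v *)
Require Import Defs.
From mathcomp Require Import all_boot all_order all_algebra.
From mathcomp Require Import zify.
Set Implicit Arguments. Unset Strict Implicit.
Import GRing.Theory.
Lemma pidx_proof m n (p : 'I_m * 'I_n) : (p.1 * n + p.2 < m * n)%N.
Proof.
case: p => [[i hi] [r hr]] /=.
have : (i.+1 * n <= m * n)%N := leq_mul hi (leqnn n).
rewrite mulSn; lia.
Qed.

Definition pidx m n (p : 'I_m * 'I_n) : 'I_(m*n) := @Ordinal (m*n) _ (pidx_proof p).

Lemma pidx_inj m n : injective (@pidx m n).
Proof.
move=> [[i hi] [r hr]] [[j hj] [s hs]] /(congr1 val) /= e.
have n0 : (0 < n)%N by case: (n) hr.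
have := congr1 (divn^~ n) e; have := congr1 (modn^~ n) e.
rewrite /= !modnMDl !modn_small // !divnMDl // !divn_small // !addn0 => e1 e2.
by subst; congr pair; apply: val_inj.
Qed.

Lemma sum_pidx (F : fieldType) m n (G : 'I_(m*n) -> F) :
  (\sum_(K < m*n) G K = \sum_(i < m) \sum_(r < n) G (pidx (i, r)))%R.
Proof.
rewrite (reindex (@pidx m n)) /=; last first.
  apply: onW_bij; apply: inj_card_bij (@pidx_inj m n) _.
  by rewrite card_prod !card_ord.
rewrite pair_big /=; apply: eq_bigr; by case.
Qed.

Lemma hi_pidx m n i r : kron_hi (@pidx m n (i, r)) = i.
Proof.
apply: val_inj => /=; have n0 : (0 < n)%N by case: (n) r => [[]|].
by rewrite divnMDl // divn_small // addn0.
Qed.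

Lemma lo_pidx m n i r : kron_lo (@pidx m n (i, r)) = r.
Proof.
apply: val_inj => /=; by rewrite modnMDl modn_small.
Qed.

Lemma modshift m x t q : (0 < m)%N ->
  ((x + t) %% m == q %% m)%N = (x %% m == (q + (m - t %% m)) %% m)%N.
Proof.
move=> m0; rewrite -(eqn_modDr (m - t %% m)) -addnA.
have -> : (t + (m - t %% m) = (t %/ m).+1 * m)%N.
  rewrite mulSn; have := divn_eq t m; have := ltn_pmod t m0; lia.
by rewrite addnC modnMDl.
Qed.

Lemma decomp m n X k : (0 < n)%N -> (k < m * n)%N ->
  (X %% (m*n) == k)%N = ((X %% n == k %% n) && ((X %/ n) %% m == k %/ n))%N.
Proof.
move=> n0 hk.
have h1 : (X %% (m*n) %% n = X %% n)%N by rewrite (modn_dvdm X (dvdn_mull m (dvdnn n))).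
have h2 : (X %% (m*n) %/ n = (X %/ n) %% m)%N by rewrite divn_modl ?dvdn_mull // mulnK.
apply/eqP/andP => [<-|[/eqP e1 /eqP e2]]; first by rewrite h1 h2.
by rewrite (divn_eq (X %% (m*n)) n) (divn_eq k n) h1 h2 e1 e2.
Qed.

Lemma downeq m n i r j s : (j < m)%N -> (s < n)%N ->
  (i * n + r + (m * n - (j * n + s)) = (i + (m - 1 - j)) * n + (r + (n - s)))%N.
Proof.
move=> hj hs.
have [d hd] : exists d, m = (j + 1 + d)%N by exists (m - j.+1)%N; lia.
subst m.
have -> : (j + 1 + d - 1 - j = d)%N by lia.
rewrite !mulnDl mul1n; lia.
Qed.
Local Open Scope ring_scope.
Lemma kronE (F : fieldType) m n (A : 'M[F]_m) (B : 'M[F]_n) i r j s :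
  kron A B (pidx (i, r)) (pidx (j, s)) = A i j * B r s.
Proof. by rewrite mxE !hi_pidx !lo_pidx. Qed.

Lemma diag_shift (F : fieldType) m (A : 'M[F]_m) mu (f : 'I_m -> 'I_m -> nat) :
  (0 < m)%N ->
  (forall k : 'I_m, \sum_(i < m) \sum_(j < m | (f i j %% m == k)%N) A i j = mu) ->
  forall t q, \sum_(i < m) \sum_(j < m) (if ((f i j + t) %% m == q %% m)%N then A i j else 0) = mu.
Proof.
move=> m0 H t q.
rewrite -(H (Ordinal (ltn_pmod (q + (m - t %% m)) m0))).
apply: eq_bigr => i _; rewrite [in RHS]big_mkcond; apply: eq_bigr => j _ /=.
by rewrite modshift.
Qed.

Lemma combine (F : fieldType) m n (A : 'M[F]_m) (B : 'M[F]_n) muA muB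
  (c1 : 'I_n -> 'I_n -> bool) (t : 'I_n -> 'I_n -> nat) (fA : 'I_m -> 'I_m -> nat) q :
  (q < m)%N ->
  \sum_(r < n) \sum_(s < n | c1 r s) B r s = muB ->
  (forall t q, \sum_(i < m) \sum_(j < m) (if ((fA i j + t) %% m == q %% m)%N then A i j else 0) = muA) ->
  \sum_(i < m) \sum_(r < n) \sum_(j < m) \sum_(s < n)
     (if c1 r s then (if ((fA i j + t r s) %% m == q)%N then A i j else 0) * B r s else 0)
  = muA * muB.
Proof.
move=> qm HB HA.
rewrite exchange_big /=.
under eq_bigr => r _ do under eq_bigr => i _ do rewrite exchange_big /=.
under eq_bigr => r _ do rewrite exchange_big /=.
have inner : forall r s, \sum_(i < m) \sum_(j < m)
     (if c1 r s then (if ((fA i j + t r s) %% m == q)%N then A i j else 0) * B r s else 0)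
     = (if c1 r s then B r s else 0) * muA.
  move=> r s; case: ifP => _; last first.
    by rewrite mul0r big1 // => i _; rewrite big1.
  rewrite mulrC -(HA (t r s) q) big_distrl; apply: eq_bigr => i _.
  rewrite big_distrl; apply: eq_bigr => j _ /=.
  by rewrite (modn_small qm) mulrC.
under eq_bigr => r _ do under eq_bigr => s _ do rewrite inner.
under eq_bigr => r _ do rewrite -big_distrl /=.
rewrite -big_distrl /= mulrC -HB; congr (_ * _).
by apply: eq_bigr => r _; rewrite [in RHS]big_mkcond.
Qed.

Theorem corollary3p1 (F : fieldType) (m n : nat) (A : 'M[F]_m) (B : 'M[F]_n)
  (muA muB : F) :
  panmagic_with A muA -> panmagic_with B muB ->
  panmagic (kron A B) /\ panmagic_with (kron A B) (muA * muB).
Proof.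
move=> hA hB.
suff H : panmagic_with (kron A B) (muA * muB) by split => //; exists (muA * muB).
have [m0|mpos] := posnP m.
  have e : (m * n = 0)%N by rewrite m0.
  by split => k; have := ltn_ord k; rewrite {2}e.
have [n0|npos] := posnP n.
  have e : (m * n = 0)%N by rewrite n0 muln0.
  by split => k; have := ltn_ord k; rewrite {2}e.
case: hA => rA cA uA dA; case: hB => rB cB uB dB.
split.
- move=> K.
  have eK : pidx (kron_hi K, kron_lo K) = K.
    by apply: val_inj => /=; rewrite -divn_eq.
  rewrite -{1}eK sum_pidx.
  under eq_bigr => j _ do under eq_bigr => s _ do rewrite kronE.
  rewrite -(rA (kron_hi K)) big_distrl /=; apply: eq_bigr => j _.
  by rewrite -big_distrr /= rB.
- move=> L.
  have eL : pidx (kron_hi L, kron_lo L) = L.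
    by apply: val_inj => /=; rewrite -divn_eq.
  rewrite -{1}eL sum_pidx.
  under eq_bigr => j _ do under eq_bigr => s _ do rewrite kronE.
  rewrite -(cA (kron_hi L)) big_distrl /=; apply: eq_bigr => j _.
  by rewrite -big_distrr /= cB.
- move=> k.
  have kq : (k %/ n < m)%N by rewrite ltn_divLR // ltn_ord.
  rewrite sum_pidx.
  under eq_bigr => i _ do under eq_bigr => r _ do rewrite big_mkcond sum_pidx.
  have key : forall i r j s,
    (if ((pidx (i, r) + pidx (j, s)) %% (m * n) == k)%N
       then kron A B (pidx (i, r)) (pidx (j, s)) else 0)
    = if ((r + s) %% n == k %% n)%N then
        (if (((i + j) + (r + s) %/ n) %% m == k %/ n)%N then A i j else 0) * B r s
      else 0.
    move=> i r j s; rewrite kronE decomp //= ?ltn_ord //.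
    have -> : (i * n + r + (j * n + s) = (i + j) * n + (r + s))%N by rewrite mulnDl; lia.
    rewrite modnMDl divnMDl //.
    set b1 := (_ %% n == k %% n)%N; set b2 := (_ %% m == k %/ n)%N.
    by case: b1; case: b2; rewrite /= ?mul0r.
  under eq_bigr => i _ do under eq_bigr => r _ do under eq_bigr => j _ do
    under eq_bigr => s _ do rewrite key.
  apply: (@combine F m n A B muA muB (fun r s : 'I_n => ((r + s) %% n == k %% n)%N)
     (fun r s : 'I_n => ((r + s) %/ n)%N) (fun i j : 'I_m => (i + j)%N) _ kq).
    by rewrite -(uB (Ordinal (ltn_pmod k npos))).
  exact: (diag_shift (f := fun i j : 'I_m => (i + j)%N) mpos uA).
- move=> k.
  have kq : (k %/ n < m)%N by rewrite ltn_divLR // ltn_ord.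
  rewrite sum_pidx.
  under eq_bigr => i _ do under eq_bigr => r _ do rewrite big_mkcond sum_pidx.
  have key : forall i r j s,
    (if ((pidx (i, r) + (m * n - pidx (j, s))) %% (m * n) == k)%N
       then kron A B (pidx (i, r)) (pidx (j, s)) else 0)
    = if ((r + (n - s)) %% n == k %% n)%N then
        (if (((i + (m - j)) + ((r + (n - s)) %/ n + m - 1)) %% m == k %/ n)%N
           then A i j else 0) * B r s
      else 0.
    move=> i r j s; rewrite kronE decomp //= ?ltn_ord //.
    have hj := ltn_ord j; have hs := ltn_ord s.
    have -> : (i * n + r + (m * n - (j * n + s))
               = (i + (m - 1 - j)) * n + (r + (n - s)))%N.
      exact: downeq.
    rewrite modnMDl divnMDl //.
    have -> : ((i + (m - 1 - j) + (r + (n - s)) %/ n) %% m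
               = (i + (m - j) + ((r + (n - s)) %/ n + m - 1)) %% m)%N.
      rewrite -(modnDr (i + (m - 1 - j) + (r + (n - s)) %/ n) m); congr modn; move: ((r + (n - s)) %/ n)%N => c; move: mpos hj; lia.
    set b1 := (_ %% n == k %% n)%N; set b2 := (_ %% m == k %/ n)%N.
    by case: b1; case: b2; rewrite /= ?mul0r.
  under eq_bigr => i _ do under eq_bigr => r _ do under eq_bigr => j _ do
    under eq_bigr => s _ do rewrite key.
  apply: (@combine F m n A B muA muB (fun r s : 'I_n => ((r + (n - s)) %% n == k %% n)%N)
     (fun r s : 'I_n => ((r + (n - s)) %/ n + m - 1)%N) (fun i j : 'I_m => (i + (m - j))%N) _ kq).
    by rewrite -(dB (Ordinal (ltn_pmod k npos))).
  exact: (diag_shift (f := fun i j : 'I_m => (i + (m - j))%N) mpos dA).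
Qed.
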